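(* For all $R>0$ and $0<\nu<1/R$, and all integers $0\le k\le N$, $$\int_0^\nu rJ_k(rR)^2dr\ge\frac{9\nu^2}{32}\cdot\frac{(\nu R)^{2N}}{(N+1)2^{2N}(N!)^2}.$$
   Context: $J_k$ is the Bessel function of the first kind of integer order $k\ge0$, $J_k(z)=\sum_{m=0}^\infty(-1)^m\frac{(z/2)^{k+2m}}{m!\,(k+m)!}$. *)

(* Defs.v *)
From Stdlib Require Import Reals Factorial.
From Coquelicot Require Import Coquelicot.
Open Scope R_scope.

Definition besselJ (k : nat) (z : R) : R :=
  Series (fun m : nat =>
    (-1) ^ m * (z / 2) ^ (k + 2 * m) / (INR (fact m) * INR (fact (k + m)))).

(* Main.v *)
Require Import Defs.
From Stdlib Require Import Reals Factorial Lia Lra.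
From Coquelicot Require Import Coquelicot.
Open Scope R_scope.

Definition aa k x m := (x/2)^(k+2*m) / (INR (fact m) * INR (fact (k+m))).
Definition qq k x m := (x/2)^2 / (INR (S m) * INR (S (k+m))).

Lemma INR_fact_ge1 n : 1 <= INR (fact n).
Proof. apply (le_INR 1). apply lt_O_fact. Qed.

Lemma aa_S k x m : aa k x (S m) = aa k x m * qq k x m.
Proof.
  unfold aa, qq.
  replace (k + 2*S m)%nat with (k+2*m+2)%nat by lia.
  replace (k + S m)%nat with (S (k+m)) by lia.
  rewrite pow_add.
  change (fact (S m)) with (S m * fact m)%nat.
  change (fact (S (k+m))) with (S (k+m) * fact (k+m))%nat.
  rewrite !mult_INR.
  field. repeat split; try apply INR_fact_neq_0; apply not_0_INR; lia.
Qed.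

Lemma qq_bounds k x m : 0 <= x <= 1 -> 0 <= qq k x m <= 1/4.
Proof.
  intros Hx. unfold qq.
  assert (H1 : 1 <= INR (S m)) by (apply (le_INR 1); lia).
  assert (H2 : 1 <= INR (S (k+m))) by (apply (le_INR 1); lia).
  assert (Hd : 1 <= INR (S m) * INR (S (k+m))) by nra.
  assert (Hi : 0 < / (INR (S m) * INR (S (k+m))) <= 1).
  { split. apply Rinv_0_lt_compat; lra.
    rewrite <- Rinv_1. apply Rinv_le_contravar; lra. }
  assert (Hp: 0 <= (x/2)^2 <= 1/4) by (simpl; nra).
  unfold Rdiv. nra.
Qed.

Lemma aa_nonneg k x m : 0 <= x -> 0 <= aa k x m.
Proof.
  intros Hx. unfold aa. apply Rdiv_le_0_compat.
  apply pow_le; lra.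
  apply Rmult_lt_0_compat; apply INR_fact_lt_0.
Qed.

Lemma aa_geom k x m : 0 <= x <= 1 -> aa k x m <= aa k x 0 * (1/4)^m.
Proof.
  intros Hx. induction m as [|m IH].
  - simpl; lra.
  - rewrite aa_S. simpl.
    pose proof (qq_bounds k x m Hx). pose proof (aa_nonneg k x m (proj1 Hx)).
    nra.
Qed.

Lemma bessel_lb k x : 0 <= x <= 1 -> besselJ k x >= aa k x 0 - aa k x 1.
Proof.
  intros Hx.
  assert (dec : Un_decreasing (aa k x)).
  { intro m. rewrite aa_S.
    pose proof (qq_bounds k x m Hx). pose proof (aa_nonneg k x m (proj1 Hx)). nra. }
  assert (cv : Un_cv (aa k x) 0).
  { apply is_lim_seq_Reals.
    apply is_lim_seq_le_le with (u := fun _ => 0) (w := fun m => aa k x 0 * (1/4)^m).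
    - intro n; split. apply aa_nonneg; lra. apply aa_geom; lra.
    - apply is_lim_seq_const.
    - replace (Finite 0) with (Rbar_mult (aa k x 0) 0) by (simpl; f_equal; ring).
      apply is_lim_seq_scal_l. apply is_lim_seq_geom. rewrite Rabs_pos_eq; lra. }
  destruct (alternated_series _ dec cv) as [l Hl].
  pose proof (alternated_series_ineq _ _ 0 dec cv Hl) as [H1 _].
  assert (E : besselJ k x = l).
  { unfold besselJ. apply is_series_unique.
    apply is_lim_seq_Reals in Hl.
    unfold is_series.
    eapply filterlim_ext; [|exact Hl].
    intro n. rewrite sum_n_Reals. apply sum_eq. intros i _.
    unfold tg_alt, aa, Rdiv. ring. }
  rewrite E. simpl in H1. unfold tg_alt in H1. simpl in H1. lra.
Qed.

Definition cc k m := (-1)^m / (INR (fact m) * INR (fact (k+m))).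

Lemma besselJ_ps k z : besselJ k z = (z/2)^k * PSeries (cc k) ((z/2)^2).
Proof.
  unfold besselJ, PSeries. rewrite <- Series_scal_l. apply Series_ext. intro m.

  unfold cc. rewrite pow_add, pow_mult. unfold Rdiv. ring.
Qed.

Lemma cc_radius k : Rbar_le 1 (CV_radius (cc k)).
Proof.
  destruct (CV_radius_bounded (cc k)) as [Hub _]. apply Hub.
  exists 1. intro n. rewrite pow1, Rmult_1_r. unfold cc, Rdiv.
  rewrite Rabs_mult, Rabs_Rinv, pow_1_abs.
  2:{ apply Rmult_integral_contrapositive; split; apply INR_fact_neq_0. }
  rewrite Rabs_pos_eq.
  2:{ apply Rmult_le_pos; apply pos_INR. }
  rewrite Rmult_1_l. rewrite <- Rinv_1. apply Rinv_le_contravar. lra.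
  pose proof (le_INR 1 _ (lt_O_fact n)). pose proof (le_INR 1 _ (lt_O_fact (k+n))). simpl in *. nra.
Qed.

Lemma f_cont k Rr r : Rabs (r * Rr) < 1 ->
  continuous (fun r => r * (besselJ k (r * Rr)) ^ 2) r.
Proof.
  intros H.
  apply (continuous_ext (fun r => r * ((r*Rr/2)^k * PSeries (cc k) ((r*Rr/2)^2))^2)).
  { intro t. rewrite besselJ_ps. reflexivity. }
  apply (ex_derive_continuous (K:=R_AbsRing) (V:=R_NormedModule)).
  auto_derive.
  apply (ex_derive_PSeries (cc k)).
  apply Rbar_lt_le_trans with 1; [|apply cc_radius].
  simpl. rewrite Rabs_mult, Rmult_1_r.
  rewrite Rabs_mult. rewrite (Rabs_pos_eq (/2)) by lra.
  assert (0 <= Rabs (r*Rr)) by apply Rabs_pos. nra.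
Qed.

Definition bb t n := t ^ (2 * n) / (INR (n + 1) * 2 ^ (2 * n) * (INR (fact n)) ^ 2).

Lemma bb_S t n : 0 <= t <= 1 -> bb t (S n) <= bb t n.
Proof.
  intros Ht.
  assert (E : bb t (S n) = bb t n * (t^2 * INR (n+1) / (4 * INR (S n + 1) * INR (S n) ^ 2))).
  { unfold bb.
    replace (2 * S n)%nat with (2*n + 2)%nat by lia. rewrite !pow_add.
    change (fact (S n)) with (S n * fact n)%nat. rewrite mult_INR.
    field. repeat split; try apply INR_fact_neq_0; try (apply not_0_INR; lia).
    apply pow_nonzero; lra. }
  rewrite E.
  assert (Hb : 0 <= bb t n).
  { unfold bb. apply Rdiv_le_0_compat. apply pow_le; lra.
    apply Rmult_lt_0_compat. apply Rmult_lt_0_compat.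
    apply lt_0_INR; lia. apply pow_lt; lra. apply pow_lt, INR_fact_lt_0. }
  assert (H1 : INR (n+1) <= INR (S n + 1)) by (apply le_INR; lia).
  assert (H2 : 1 <= INR (S n)) by (apply (le_INR 1); lia).
  assert (H3 : 1 <= INR (n+1)) by (apply (le_INR 1); lia).
  assert (Hq : 0 <= t^2 * INR (n+1) / (4 * INR (S n + 1) * INR (S n) ^ 2) <= 1).
  { assert (Ht2 : 0 <= t^2 <= 1) by (simpl; nra).
    assert (HD : 1 <= INR (S n) ^ 2) by (replace (INR (S n) ^ 2) with (INR (S n) * INR (S n)) by ring; nra).
    assert (HP : INR (n+1) <= 4 * INR (S n + 1) * INR (S n) ^ 2) by nra.
    assert (HQ : 0 < 4 * INR (S n + 1) * INR (S n) ^ 2).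
    { apply Rmult_lt_0_compat; [|lra]. apply Rmult_lt_0_compat; lra. }
    assert (HT : t^2 * INR (n+1) <= INR (n+1)) by nra.
    split. apply Rdiv_le_0_compat; nra.
    apply (proj1 (Rcomplements.Rdiv_le_1 _ _ HQ)). lra. }
  nra.
Qed.

Lemma bb_mono t k d : 0 <= t <= 1 -> bb t (k + d) <= bb t k.
Proof.
  intros Ht. induction d as [|d IH].
  - rewrite Nat.add_0_r; lra.
  - rewrite Nat.add_succ_r. eapply Rle_trans; [apply bb_S; exact Ht|exact IH].
Qed.

Theorem lemma8p2 (Rr nu : R) (k N : nat) :
  0 < Rr -> 0 < nu -> nu < 1 / Rr -> (k <= N)%nat ->
  RInt (fun r => r * (besselJ k (r * Rr)) ^ 2) 0 nu
  >= 9 * nu ^ 2 / 32 *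
     ((nu * Rr) ^ (2 * N) / (INR (N + 1) * 2 ^ (2 * N) * (INR (fact N)) ^ 2)).
Proof.
  intros HR Hnu Hlt HkN.
  assert (HnR : nu * Rr < 1).
  { replace 1 with (1/Rr*Rr) by (field; lra). apply Rmult_lt_compat_r; lra. }
  set (F := INR (fact k)).
  assert (HF : 0 < F) by apply INR_fact_lt_0.
  set (C := 9/16 * (Rr/2)^(2*k) / F^2).
  assert (Ig : is_RInt (fun r => C * r^(2*k+1)) 0 nu
                 (C * (nu ^ S (2*k+1) / INR (S (2*k+1)) - 0 ^ S (2*k+1) / INR (S (2*k+1))))).
  { eapply is_RInt_ext; [|apply (is_RInt_scal _ _ _ C _ (is_RInt_pow 0 nu (2*k+1)))].
    intros; reflexivity. }
  assert (Hle : RInt (fun r => C * r^(2*k+1)) 0 nu <= RInt (fun r => r * (besselJ k (r * Rr)) ^ 2) 0 nu).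
  { apply RInt_le; [lra| eexists; exact Ig | |].
    { apply (ex_RInt_continuous (V:=R_CompleteNormedModule)). intros z Hz.
      rewrite Rmin_left in Hz by lra. rewrite Rmax_right in Hz by lra.
      apply f_cont. rewrite Rabs_pos_eq by nra. nra. }
    intros x Hx.
    assert (Hz : 0 <= x * Rr <= 1) by nra.
    pose proof (bessel_lb k (x*Rr) Hz) as HJ.
    rewrite aa_S in HJ.
    pose proof (qq_bounds k (x*Rr) 0 Hz). pose proof (aa_nonneg k (x*Rr) 0 (proj1 Hz)).
    assert (HJ' : 3/4 * aa k (x*Rr) 0 <= besselJ k (x*Rr)) by nra.
    assert (E : C * x^(2*k+1) = x * (3/4 * aa k (x*Rr) 0)^2).
    { unfold C, aa. replace (k + 2*0)%nat with k by lia. replace (k+0)%nat with k by lia.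
      change (INR (fact 0)) with 1. fold F.
      replace (x*Rr/2) with (x * (Rr/2)) by field. rewrite (Rpow_mult_distr x (Rr/2) k).
      replace (2*k)%nat with (k+k)%nat by lia.
      rewrite !pow_add. field. lra. }
    rewrite E.
    apply Rmult_le_compat_l; [lra|].
    simpl. rewrite !Rmult_1_r. apply Rmult_le_compat; nra. }
  rewrite (is_RInt_unique _ _ _ _ Ig) in Hle.
  rewrite pow_i in Hle by lia.
  assert (Hb := bb_mono (nu*Rr) k (N-k) ltac:(nra)).
  replace (k + (N-k))%nat with N in Hb by lia.
  unfold bb in Hb.
  apply Rle_ge. eapply Rle_trans; [|exact Hle].
  assert (E2 : C * (nu ^ S (2 * k + 1) / INR (S (2 * k + 1)) - 0 / INR (S (2 * k + 1)))
     = 9 * nu^2/32 * ((nu * Rr) ^ (2 * k) / (INR (k + 1) * 2 ^ (2 * k) * INR (fact k) ^ 2))).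
  { unfold C. fold F.
    assert (HI : INR (S (2*k+1)) = 2 * INR (k+1)) by (rewrite S_INR, !plus_INR, mult_INR; simpl; ring).
    rewrite HI.
    replace (S (2*k+1)) with (k+k+2)%nat by lia.
    replace (2*k)%nat with (k+k)%nat by lia.
    replace (Rr/2) with (Rr * /2) by (unfold Rdiv; ring).
    rewrite !pow_add, !Rpow_mult_distr, !pow_inv.
    field. repeat split; try lra; try (apply pow_nonzero; lra); apply not_0_INR; lia. }
  rewrite E2. apply Rmult_le_compat_l; [|exact Hb].
  assert (0 <= nu^2) by (simpl; nra). lra.
Qed.
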